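(* Let $\mathcal{X}$ be a projective, nonsingular, geometrically irreducible curve of genus $g$ over $\mathbb{F}_q$. Let $\mathcal{P}$ be a proper subset of $\mathcal{X}(\mathbb{F}_q)$ and $D=\sum_{P\in\mathcal{P}}P$. Let $G,H,J$ be divisors on $\mathcal{X}$ of degree at most $\deg(D)-1$ with $(\mathrm{supp}(G)\cup\mathrm{supp}(H)\cup\mathrm{supp}(J))\cap\mathrm{supp}(D)=\varnothing$. For each nonzero $f\in\mathscr{L}(J)$ let $H_f=H-(f)$. If \[ \mathscr{L}(\mathrm{lcm}(G,H_f)-D)\cap\big(\mathscr{L}(G)+\mathscr{L}(H_f)\big)=\{0\}\quad\text{for all nonzero }f\in\mathscr{L}(J), \] then $C(D,G)\cap C(D,H_f)=C(D,\gcd(G,H_f))$ (for every nonzero $f\in\mathscr{L}(J)$).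
   Context: $(f)$ is the principal divisor of a nonzero function $f$; $\gcd$ and $\mathrm{lcm}$ of divisors are taken coefficientwise (min and max of coefficients). $\mathscr{L}(E)=\{f\in\mathbb{F}_q(\mathcal{X})^*:(f)+E\ge0\}\cup\{0\}$, and $\mathscr{L}(G)+\mathscr{L}(H_f)$ is the sum of subspaces of the function field. Writing $D=P_1+\dots+P_n$, for a divisor $E$ such that every function in $\mathscr{L}(E)$ is regular at all points of $\mathrm{supp}(D)$, $C(D,E)=\{(f(P_1),\dots,f(P_n)):f\in\mathscr{L}(E)\}\subseteq\mathbb{F}_q^n$ (this applies to $G$, $H_f$ and $\gcd(G,H_f)$ here, since $\mathscr{L}(H_f)=f\mathscr{L}(H)$). *)

(* Defs.v *)
(* There is no algebraic-geometry library, so a curve X over F_q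
   is modelled through its function field F_q(X) together with its places
   (= closed points of X), the valuations v_P, place degrees and the residue
   (evaluation) maps at rational places. *)
From HB Require Import structures.
From mathcomp Require Import all_boot all_order all_algebra.
Set Implicit Arguments. Unset Strict Implicit. Unset Printing Implicit Defensive.
Import Order.TTheory GRing.Theory Num.Theory.
Local Open Scope ring_scope.

Definition divisor (Pl : eqType) := Pl -> int.

Definition has_degree (Pl : eqType) (pdeg : Pl -> nat) (E : divisor Pl) (d : int) :=
  exists s : seq Pl, [/\ uniq s, (forall P, E P != 0 -> P \in s) &
                        d = \sum_(P <- s) E P * (pdeg P)%:Z].

Definition finite_support (Pl : eqType) (E : divisor Pl) :=
  exists s : seq Pl, forall P, E P != 0 -> P \in s.

(* Data of the function field F_q(X) of the curve X over F = F_q: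
   cst   : the embedding of the constants F_q into F_q(X)
   princ_div  : principal divisor, princ_div f P = v_P(f) (meaningful for f != 0)
   pdeg  : degree of a place (rational points = places of degree 1)
   ev    : ev P f = f(P), the residue class of f at a rational place P *)
Record curve_data (F : finFieldType) (K : fieldType) (Pl : eqType) := CurveData {
  cst : {rmorphism F -> K};
  princ_div : K -> divisor Pl;
  pdeg : Pl -> nat;
  ev : Pl -> K -> F
}.

(* axioms of a function field of one variable with full constant field F_q,
   its places/valuations and the evaluation at rational places *)
Definition is_curve (F : finFieldType) (K : fieldType) (Pl : eqType)
  (X : curve_data F K Pl) : Prop :=
  let v := princ_div X in
  (forall x y P, x != 0 -> y != 0 -> v (x * y) P = v x P + v y P) /\
  (forall x y P, x != 0 -> y != 0 -> x + y != 0 ->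
                  Num.min (v x P) (v y P) <= v (x + y) P) /\
  (forall P, exists t, t != 0 /\ v t P = 1) /\
  (forall x, x != 0 -> finite_support (v x)) /\
      (* nonzero constants are units everywhere; F_q is the full constant field *)
  (forall a P, a != 0 -> v (cst X a) P = 0) /\
  (forall x, x != 0 -> (forall P, v x P = 0) -> exists a, x = cst X a) /\
  (* transcendence: there are nonconstant functions *)
  (exists x, x != 0 /\ exists P, v x P != 0) /\
  (forall P, (0 < pdeg X P)%N) /\
  (forall x, x != 0 -> has_degree (pdeg X) (v x) 0) /\
  (* evaluation at rational places (residue field = F_q) *)
      forall P, pdeg X P = 1%N ->
      [/\ (forall a, ev X P (cst X a) = a),
          (forall x y, (x == 0) || (0 <= v x P) -> (y == 0) || (0 <= v y P) ->
             ev X P (x + y) = ev X P x + ev X P y),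
          (forall x y, (x == 0) || (0 <= v x P) -> (y == 0) || (0 <= v y P) ->
             ev X P (x * y) = ev X P x * ev X P y),
          ev X P 0 = 0
        & (forall x, x != 0 -> 0 <= v x P -> (ev X P x == 0) = (0 < v x P))].

Definition RR (F : finFieldType) (K : fieldType) (Pl : eqType)
  (X : curve_data F K Pl) (E : divisor Pl) (f : K) : Prop :=
  f = 0 \/ forall P, 0 <= princ_div X f P + E P.

Definition dgcd (Pl : eqType) (E1 E2 : divisor Pl) : divisor Pl :=
  fun P => Num.min (E1 P) (E2 P).
Definition dlcm (Pl : eqType) (E1 E2 : divisor Pl) : divisor Pl :=
  fun P => Num.max (E1 P) (E2 P).

Definition sum_points (Pl : eqType) (Ps : seq Pl) : divisor Pl :=
  fun P => ((P \in Ps) : nat)%:Z.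

Definition AGcode (F : finFieldType) (K : fieldType) (Pl : eqType)
  (X : curve_data F K Pl) (Ps : seq Pl) (E : divisor Pl) (c : seq F) : Prop :=
  exists f, RR X E f /\ c = [seq ev X P f | P <- Ps].

(* Main.v *)
Require Import Defs.
From HB Require Import structures.
From mathcomp Require Import all_boot all_order all_algebra.
From mathcomp Require Import zify.
Import Order.TTheory GRing.Theory Num.Theory.
Local Open Scope ring_scope.

Theorem proposition4p5
  (F : finFieldType) (K : fieldType) (Pl : eqType) (X : curve_data F K Pl)
  (HX : is_curve X)
  (Ps : seq Pl) (HPs_uniq : uniq Ps)
  (HPs_rat : forall P, P \in Ps -> pdeg X P = 1%N)
  (HPs_proper : exists P, pdeg X P = 1%N /\ P \notin Ps)
  (G H J : divisor Pl)
  (HGfin : finite_support G) (HHfin : finite_support H) (HJfin : finite_support J)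
  (HGdeg : exists d, has_degree (pdeg X) G d /\ d <= (size Ps)%:Z - 1)
  (HHdeg : exists d, has_degree (pdeg X) H d /\ d <= (size Ps)%:Z - 1)
  (HJdeg : exists d, has_degree (pdeg X) J d /\ d <= (size Ps)%:Z - 1)
  (Hsupp : forall P, P \in Ps -> [/\ G P = 0, H P = 0 & J P = 0])
  (Hint : forall f, f != 0 -> RR X J f ->
     let Hf := fun P => H P - princ_div X f P in
     forall x, RR X (fun P => dlcm G Hf P - sum_points Ps P) x ->
       (exists a b, [/\ RR X G a, RR X Hf b & x = a + b]) -> x = 0) :
  forall f, f != 0 -> RR X J f ->
    let Hf := fun P => H P - princ_div X f P in
    forall c : seq F,
      (AGcode X Ps G c /\ AGcode X Ps Hf c) <-> AGcode X Ps (dgcd G Hf) c.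
Proof.
move: HX; rewrite /is_curve /=.
move=> [Hmul [Hadd [_ [_ [Hcst [_ [_ [_ [_ Hev]]]]]]]]].
have m1 : cst X (-1) != 0 by rewrite rmorphN1 oppr_eq0 oner_eq0.
have vm1 : forall P, princ_div X (cst X (-1)) P = 0.
  by move=> P; apply: Hcst; rewrite oppr_eq0 oner_eq0.
have negE : forall x : K, - x = cst X (-1) * x by move=> x; rewrite rmorphN1 mulN1r.
have vN : forall x P, x != 0 -> princ_div X (- x) P = princ_div X x P.
  by move=> x P x0; rewrite negE Hmul // vm1 add0r.
have RRN : forall E x, RR X E x -> RR X E (- x).
  move=> E x [->|Hx]; first by left; rewrite oppr0.
  have [->|x0] := eqVneq x 0; first by left; rewrite oppr0.
  by right=> P; rewrite vN.
have RRD : forall E x y, RR X E x -> RR X E y -> RR X E (x + y).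
  move=> E x y [->|Hx]; first by rewrite add0r.
  move=> [->|Hy]; first by rewrite addr0; right.
  have [->|s0] := eqVneq (x + y) 0; first by left.
  have [->|x0] := eqVneq x 0; first by rewrite add0r; right.
  have [->|y0] := eqVneq y 0; first by rewrite addr0; right.
  right=> P; have := Hadd x y P x0 y0 s0; have := Hx P; have := Hy P.
  move: (princ_div X x P) (princ_div X y P) (princ_div X (x+y) P) (E P) => a b c e; lia.
have RRle : forall (E1 E2 : divisor Pl) x, (forall P, E1 P <= E2 P) ->
    RR X E1 x -> RR X E2 x.
  move=> E1 E2 x HE [->|Hx]; first by left.
  by right=> P; have := HE P; have := Hx P; lia.
move=> f f0 [/eqP|Jf]; first by rewrite (negbTE f0).
move=> c; set Hf := (fun P => H P - princ_div X f P); split.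
  move=> [[a [Ga ca]] [b [Hb cb]]].
  set d := a - b.
  have Dd : RR X (fun P => dlcm G Hf P - sum_points Ps P) d.
    have [->|d0] := eqVneq d 0; first by left.
    have L1 : RR X (dlcm G Hf) d.
      apply: RRD; first by apply: RRle Ga => P; rewrite /dlcm; lia.
      by apply: RRN; apply: RRle Hb => P; rewrite /dlcm; lia.
    case: L1 => [/eqP|L1]; first by rewrite (negbTE d0).
    right=> P; rewrite /sum_points.
    case: (boolP (P \in Ps)) => PPs /=; last by have := L1 P; lia.
    have [G0 H0 J0] := Hsupp P PPs.
    have vf := Jf P; rewrite J0 addr0 in vf.
    have [ev1 evD evM ev0 evZ] := Hev P (HPs_rat P PPs).
    have va : (a == 0) || (0 <= princ_div X a P).
      case: Ga => [->|Ga]; first by rewrite eqxx.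
      by apply/orP; right; have := Ga P; rewrite G0 addr0.
    have vb : (- b == 0) || (0 <= princ_div X (- b) P).
      case: Hb => [->|Hb']; first by rewrite oppr0 eqxx.
      have [->|b0] := eqVneq b 0; first by rewrite oppr0 eqxx.
      apply/orP; right; rewrite vN //; have := Hb' P; rewrite /Hf H0.
      move: vf; lia.
    have evd : ev X P d = 0.
      have evN : ev X P (- b) = - ev X P b.
        have [->|b0] := eqVneq b 0; first by rewrite oppr0 ev0 oppr0.
        have vb' : 0 <= princ_div X b P.
          by move: vb; rewrite oppr_eq0 (negbTE b0) vN.
        rewrite negE evM ?vm1 ?lexx ?vb' ?orbT // (ev1 (-1)).
        by rewrite mulN1r.
      rewrite /d evD // evN.
      have : ev X P a = ev X P b.
        have := ca; rewrite cb => /eq_in_map E; exact: (esym (E P PPs)).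
      by move=> ->; rewrite subrr.
    have vd : 0 <= princ_div X d P.
      have [a0|a0] := eqVneq a 0.
        move: vb d0; rewrite /d a0 add0r => /orP[/eqP->|//]; by rewrite eqxx.
      have [b0|b0] := eqVneq (- b) 0.
        move: va d0; rewrite /d b0 addr0 => /orP[/eqP->|//]; by rewrite eqxx.
      apply: le_trans (Hadd a (- b) P a0 b0 d0); rewrite le_min.
      by move: va vb; rewrite (negbTE a0) (negbTE b0) /= => -> ->.
    have := evZ d d0 vd; rewrite evd eqxx => /esym/idP.
    rewrite /dlcm G0 /Hf H0; move: vf.
    move: (princ_div X d P) (princ_div X f P) => x y; lia.
  have d0 := Hint f f0 (or_intror Jf) d Dd.
  have := d0; rewrite -/Hf => d0'.
  have /(_ (ex_intro _ a (ex_intro _ (- b) (And3 Ga (RRN _ _ Hb) erefl)))) := d0'.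
  move=> /eqP; rewrite subr_eq0 => /eqP ab.
  exists a; split=> //.
  case: Ga => [->|Ga]; first by left.
  case: Hb => [b0|Hb]; first by left; rewrite ab.
  by right=> P; rewrite /dgcd; have := Ga P; have := Hb P; rewrite -ab; lia.
move=> [a [Ga ca]]; split; exists a; split=> //.
  by apply: RRle Ga => P; rewrite /dgcd; lia.
by apply: RRle Ga => P; rewrite /dgcd; lia.
Qed.
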